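(* Let $B$ be an $n\times n$ skew-symmetrizable matrix, $\mathbf d$ positive integers, $D=\mathrm{diag}(d_1,\dots,d_n)$, and let $G^t=(g^t_{ij})$ be the $G$-matrices of the $(\mathbf d,\mathbf z)$-cluster pattern with principal coefficients and initial seed $(\mathbf x,\mathbf y,B)$. Put $\tilde g^t_{ij}=d_ig^t_{ij}d_j^{-1}$, i.e. $\tilde G^t=DG^tD^{-1}$. Then for every vertex $t$, $\tilde G^t$ is an integer matrix equal to the $G$-matrix at $t$ of the ordinary cluster pattern with principal coefficients and initial seed $(\mathbf x,\mathbf y,DB)$.
   Context: All matrices are integer, $[a]_+=\max(a,0)$; $DB$ is skew-symmetrizable. A semifield is an abelian multiplicative group with a commutative associative $\oplus$ over which multiplication distributes; $\mathcal F=\mathbb Q\mathbb P(w_1,\dots,w_n)$. Mutation data: positive integers $\mathbf d$ and $z_{i,s}$ ($1\le s\le d_i-1$) with $z_{i,s}=z_{i,d_i-s}$, $z_{i,0}=z_{i,d_i}=1$. The $(\mathbf d,\mathbf z)$-mutation $\mu_k(\mathbf{x},\mathbf{y},B)=(\mathbf{x}',\mathbf{y}',B')$ of a seed (skew-symmetrizable $B=(b_{ij})$, $\mathbf x\in\mathcal F^n$, $\mathbf y\in\mathbb P^n$): $b'_{ij}=-b_{ij}$ if $i=k$ or $j=k$, else $b'_{ij}=b_{ij}+d_k([-b_{ik}]_+b_{kj}+b_{ik}[b_{kj}]_+)$; $y'_k=y_k^{-1}$, $y'_i=y_i(y_k^{[\varepsilon b_{ki}]_+})^{d_k}(\bigoplus_{s=0}^{d_k}z_{k,s}y_k^{\varepsilon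 s})^{-b_{ki}}$ ($i\ne k$); $x'_i=x_i$ ($i\ne k$), $x'_k=x_k^{-1}(\prod_jx_j^{[-\varepsilon b_{jk}]_+})^{d_k}\frac{\sum_{s=0}^{d_k}z_{k,s}\hat y_k^{\varepsilon s}}{\bigoplus_{s=0}^{d_k}z_{k,s}y_k^{\varepsilon s}}$, $\hat y_i=y_i\prod_jx_j^{b_{ji}}$, $\varepsilon=\pm1$. $\mathbb T_n$ is the $n$-regular tree with edges labeled $1,\dots,n$, distinct labels at each vertex; a cluster pattern assigns seeds to vertices related by $\mu_k$ along edges labeled $k$, initial seed at fixed $t_0$. Principal coefficients: $\mathrm{Trop}(\mathbf y,\mathbf z)$ is the free abelian group generated by formal $y_1,\dots,y_n$, $z_{i,s}$ ($z_{i,s}=z_{i,d_i-s}$), with $\oplus$ the componentwise minimum of exponents; the pattern with principal coefficients lives in it with initial seed $(\mathbf x,\mathbf y,B)$. Each $x^t_i$ equals an $X$-function $X^t_i\in\mathbb Z[x_1^{\pm1},\dots,x_n^{\pm1},\mathbf y,\mathbf z]$, homogeneous for the grading $\deg x_i=\mathbf e_i$, $\deg y_j=-\sum_ib_{ij}\mathbf e_i$ ($B$ the initial matrix), $\deg z_{i,s}=0$; $\deg X^t_j=\sum_ig^t_{ij}\mathbf e_i$ defines $G^t=(g^t_{ij})$. The ordinary cluster pattern with principal coefficients is the special case $\mathbf d=(1,\dots,1)$ (no $\mathbf z$), with $G$-matrices defined the same way (using its own initial matrix for the grading). *)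

(* Defs.v *)
(* Model of (d,z)-cluster patterns with principal coefficients,
   realized by X-functions (Laurent polynomials in x, y, z). *)
From HB Require Import structures.
From mathcomp Require Import all_boot all_order all_algebra.

Import Order.TTheory GRing.Theory Num.Theory.
Local Open Scope ring_scope.

Definition posp (a : int) : int := if 0 <= a then a else 0.

Definition skew_symmetrizable {n : nat} (B : 'M[int]_n) : Prop :=
  exists r : 'I_n -> nat, (forall i, (0 < r i)%N) /\
    forall i j, (r i)%:Z * B i j = - ((r j)%:Z * B j i).

Definition dmat {n : nat} (d : 'I_n -> nat) (B : 'M[int]_n) : 'M[int]_n :=
  \matrix_(i, j) ((d i)%:Z * B i j).

(* index set for the generators z_{i,s}; z_{i,s} (1 <= s <= d_i - 1) is stored
   at index (i, minn s (d_i - s)), which encodes z_{i,s} = z_{i,d_i-s}. *)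
Definition zidx {n : nat} (d : 'I_n -> nat) : finType := {i : 'I_n & 'I_(d i)}.

(* Elements of Trop(y,z): exponent vectors in y and in z *)
Definition Trop {n : nat} (d : 'I_n -> nat) :=
  ({ffun 'I_n -> int} * {ffun zidx d -> int})%type.

Definition tone {n : nat} (d : 'I_n -> nat) : Trop d := ([ffun _ => 0], [ffun _ => 0]).
Definition tmul {n : nat} {d : 'I_n -> nat} (a b : Trop d) : Trop d :=
  ([ffun i => a.1 i + b.1 i], [ffun p => a.2 p + b.2 p]).
Definition tpow {n : nat} {d : 'I_n -> nat} (a : Trop d) (c : int) : Trop d :=
  ([ffun i => c * a.1 i], [ffun p => c * a.2 p]).
(* tropical sum = componentwise minimum of exponents *)
Definition tmin {n : nat} {d : 'I_n -> nat} (a b : Trop d) : Trop d :=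
  ([ffun i => Num.min (a.1 i) (b.1 i)], [ffun p => Num.min (a.2 p) (b.2 p)]).
(* z_{k,s}, with z_{k,0} = z_{k,d_k} = 1 *)
Definition tz {n : nat} (d : 'I_n -> nat) (k : 'I_n) (s : nat) : Trop d :=
  ([ffun _ => 0],
   [ffun p : zidx d => if [&& tag p == k, (0 < s < d k)%N &
                             (val (tagged p) == minn s (d k - s))%N]
                       then 1 else 0]).
Definition yinit {n : nat} (d : 'I_n -> nat) (i : 'I_n) : Trop d :=
  ([ffun j => if j == i then 1 else 0], [ffun _ => 0]).

(* \bigoplus_{s=0}^{d_k} z_{k,s} y^s  (epsilon = +1) *)
Definition tsum {n : nat} {d : 'I_n -> nat} (k : 'I_n) (y : Trop d) : Trop d :=
  foldr (fun s acc => tmin (tmul (tz d k s) (tpow y s%:Z)) acc)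
        (tone d) (iota 1 (d k)).

Definition bmut {n : nat} (d : 'I_n -> nat) (k : 'I_n) (B : 'M[int]_n) : 'M[int]_n :=
  \matrix_(i, j) (if (i == k) || (j == k) then - B i j
                  else B i j + (d k)%:Z * (posp (- B i k) * B k j + B i k * posp (B k j))).

(* (d,z)-mutation of the coefficient tuple (epsilon = +1), B = matrix before mutation *)
Definition ymut {n : nat} (d : 'I_n -> nat) (k : 'I_n) (B : 'M[int]_n) (y : 'I_n -> Trop d)
  : 'I_n -> Trop d :=
  fun i => if i == k then tpow (y k) (-1)
           else tmul (tmul (y i) (tpow (y k) (posp (B k i) * (d k)%:Z)))
                     (tpow (tsum k (y k)) (- B k i)).

(* Vertices of T_n are encoded by words of edge labels read from t0;
   (B^t, y^t) computed along the word. *)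
Definition seedBY {n : nat} (d : 'I_n -> nat) (B0 : 'M[int]_n) (w : seq 'I_n)
  : 'M[int]_n * ('I_n -> Trop d) :=
  foldl (fun (s : 'M[int]_n * ('I_n -> Trop d)) k => (bmut d k s.1, ymut d k s.1 s.2))
        (B0, yinit d) w.

(* Laurent polynomials in x, y, z with integer coefficients: formal finite sums *)
Definition Mon {n : nat} (d : 'I_n -> nat) := ({ffun 'I_n -> int} * Trop d)%type.
Definition LP {n : nat} (d : 'I_n -> nat) := seq (int * Mon d).

Definition coeff {n : nat} {d : 'I_n -> nat} (p : LP d) (m : Mon d) : int :=
  \sum_(a <- p | a.2 == m) a.1.
Definition lp_eq {n : nat} {d : 'I_n -> nat} (p q : LP d) : Prop :=
  forall m, coeff p m = coeff q m.
Definition mon_mul {n : nat} {d : 'I_n -> nat} (a b : Mon d) : Mon d :=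
  ([ffun i => a.1 i + b.1 i], tmul a.2 b.2).
Definition lp_mul {n : nat} {d : 'I_n -> nat} (p q : LP d) : LP d :=
  [seq (a.1 * b.1, mon_mul a.2 b.2) | a <- p, b <- q].
Definition lp_one {n : nat} (d : 'I_n -> nat) : LP d := [:: (1, ([ffun _ => 0], tone d))].
Definition lp_pow {n : nat} {d : 'I_n -> nat} (p : LP d) (e : nat) : LP d :=
  iter e (lp_mul p) (lp_one d).
Definition lp_prod {n : nat} {d : 'I_n -> nat} (ps : seq (LP d)) : LP d :=
  foldr (@lp_mul n d) (lp_one d) ps.
Definition xvar {n : nat} (d : 'I_n -> nat) (i : 'I_n) : LP d :=
  [:: (1, ([ffun j => if j == i then 1 else 0], tone d))].
Definition lp_trop {n : nat} {d : 'I_n -> nat} (t : Trop d) : LP d := [:: (1, ([ffun _ => 0], t))].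

(* Exchange relation (epsilon = +1), with denominators cleared:
   x'_k * x_k * (\bigoplus_s z_{k,s} y_k^s)
     = \sum_{s=0}^{d_k} z_{k,s} y_k^s \prod_j x_j^{s b_jk + d_k [-b_jk]_+}
   (the exponents are >= 0, so absz is exact). *)
Definition exch {n : nat} (d : 'I_n -> nat) (B : 'M[int]_n) (y : 'I_n -> Trop d)
  (x : 'I_n -> LP d) (k : 'I_n) (xk' : LP d) : Prop :=
  lp_eq (lp_mul (lp_mul xk' (x k)) (lp_trop (tsum k (y k))))
        (flatten [seq lp_mul (lp_trop (tmul (tz d k s) (tpow (y k) s%:Z)))
                     (lp_prod [seq lp_pow (x j) (absz (s%:Z * B j k + (d k)%:Z * posp (- B j k)))
                              | j <- enum 'I_n])
                 | s <- iota 0 (d k).+1]).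

Definition is_XPattern {n : nat} (d : 'I_n -> nat) (B0 : 'M[int]_n) (X : seq 'I_n -> 'I_n -> LP d)
  : Prop :=
  (forall i, lp_eq (X [::] i) (xvar d i)) /\
  forall w k,
    (forall i, i != k -> lp_eq (X (rcons w k) i) (X w i)) /\
    exch d (seedBY d B0 w).1 (seedBY d B0 w).2 (X w) k (X (rcons w k) k).

(* grading: deg x_i = e_i, deg y_j = - sum_i b_ij e_i, deg z = 0 *)
Definition mdeg {n : nat} {d : 'I_n -> nat} (B0 : 'M[int]_n) (m : Mon d) (i : 'I_n) : int :=
  m.1 i - \sum_(j < n) B0 i j * m.2.1 j.

Definition is_Gmatrix {n : nat} (d : 'I_n -> nat) (B0 : 'M[int]_n) (X : seq 'I_n -> 'I_n -> LP d)
  (t : seq 'I_n) (G : 'M[int]_n) : Prop :=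
  forall j m, coeff (X t j) m != 0 -> forall i, mdeg B0 m i = G i j.

Definition ones (n : nat) : 'I_n -> nat := fun _ => 1%N.

(* Main.v *)
Require Import Defs.
From HB Require Import structures.
From mathcomp Require Import all_boot all_order all_algebra.
From mathcomp Require Import ring zify.
Import Order.TTheory GRing.Theory Num.Theory.
Local Open Scope ring_scope.

Fixpoint lexlt (s t : seq int) : bool :=
  match s, t with
  | a :: s', b :: t' => (a < b) || ((a == b) && lexlt s' t')
  | _, _ => false
  end.

Fixpoint addseq (s t : seq int) : seq int :=
  match s, t with
  | a :: s', b :: t' => (a + b) :: addseq s' t'
  | _, _ => [::]
  end.

Definition oppseq (s : seq int) : seq int := map (fun x => - x) s.

Lemma lexlt_irr s : lexlt s s = false.
Proof. by elim: s => //= a s ->; rewrite ltxx eqxx. Qed.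

Lemma lexlt_trans s t u : lexlt s t -> lexlt t u -> lexlt s u.
Proof.
elim: s t u => [|a s IH] [|b t] [|c u] //=.
case/orP=> [ab|/andP[/eqP-> st]]; case/orP=> [bc|/andP[/eqP<- tu]].
- by rewrite (lt_trans ab bc).
- by rewrite ab.
- by rewrite bc.
- by rewrite eqxx (IH _ _ st tu) orbT.
Qed.

Lemma lexlt_total s t : size s = size t -> s != t -> lexlt s t || lexlt t s.
Proof.
elim: s t => [|a s IH] [|b t] //= [] hs.
rewrite eqseq_cons negb_and => hne.
case: (ltgtP a b) => hab /=; try by [].
subst b; apply: IH => //.
by move: hne; rewrite eqxx.
Qed.

Lemma lexlt_add s t u : size s = size u -> size t = size u ->
  lexlt (addseq s u) (addseq t u) = lexlt s t.
Proof.
elim: s t u => [|a s IH] [|b t] [|c u] //= [] h1 [] h2.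
by rewrite ltrD2r (inj_eq (addIr c)) IH.
Qed.

Lemma lexlt_opp s t : size s = size t -> lexlt (oppseq s) (oppseq t) = lexlt t s.
Proof.
elim: s t => [|a s IH] [|b t] //= [] h.
by rewrite ltrN2 eqr_opp eq_sym IH.
Qed.

Lemma lexlt_cat u v u' v' : size u = size u' ->
  lexlt (u ++ v) (u' ++ v') = lexlt u u' || (u == u') && lexlt v v'.
Proof.
elim: u u' => [|a u IH] [|b u'] //= [] h.
rewrite IH // eqseq_cons.
by case: (a < b); case: (a == b).
Qed.

Lemma lexle_antisym u u' : lexlt u u' || (u == u') -> lexlt u' u || (u' == u) -> u = u'.
Proof.
case/orP=> [h1|/eqP//]; case/orP=> [h2|/eqP//].
by have := @lexlt_trans _ _ _ h1 h2; rewrite lexlt_irr.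
Qed.

Lemma size_addseq s t : size s = size t -> size (addseq s t) = size s.
Proof. by elim: s t => [|a s IH] [|b t] //= [] /IH ->. Qed.

Lemma addseq_cat s1 s2 t1 t2 : size s1 = size t1 ->
  addseq (s1 ++ s2) (t1 ++ t2) = addseq s1 t1 ++ addseq s2 t2.
Proof. by elim: s1 t1 => [|a s IH] [|b t] //= [] /IH ->. Qed.

Lemma addseq_map (T : Type) (f g : T -> int) (l : seq T) :
  addseq (map f l) (map g l) = map (fun x => f x + g x) l.
Proof. by elim: l => //= a l ->. Qed.


Arguments lexlt_trans {s t u}.
Arguments lexlt_total {s t}.

Definition mon_one {n : nat} (d : 'I_n -> nat) : Mon d := ([ffun _ => 0], tone d).
Definition mon_inv {n : nat} {d : 'I_n -> nat} (a : Mon d) : Mon d :=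
  ([ffun i => - a.1 i], ([ffun i => - a.2.1 i], [ffun p => - a.2.2 p])).

Lemma mon_ext {n : nat} {d : 'I_n -> nat} (a b : Mon d) :
  (forall i, a.1 i = b.1 i) -> (forall i, a.2.1 i = b.2.1 i) -> (forall p, a.2.2 p = b.2.2 p) -> a = b.
Proof.
case: a => [a1 [a2 a3]]; case: b => [b1 [b2 b3]] /= h1 h2 h3.
have e1 : a1 = b1 by apply/ffunP.
have e2 : a2 = b2 by apply/ffunP.
have e3 : a3 = b3 by apply/ffunP.
by rewrite e1 e2 e3.
Qed.

Lemma mon_mulC {n : nat} {d : 'I_n -> nat} (a b : Mon d) : mon_mul a b = mon_mul b a.
Proof. by apply: mon_ext => i; rewrite /= !ffunE addrC. Qed.

Lemma mon_mulA {n : nat} {d : 'I_n -> nat} (a b c : Mon d) :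
  mon_mul a (mon_mul b c) = mon_mul (mon_mul a b) c.
Proof. by apply: mon_ext => i; rewrite /= !ffunE addrA. Qed.

Lemma mon_mul1m {n : nat} {d : 'I_n -> nat} (a : Mon d) : mon_mul (mon_one d) a = a.
Proof. by apply: mon_ext => i; rewrite /= !ffunE add0r. Qed.

Lemma mon_mulVm {n : nat} {d : 'I_n -> nat} (a : Mon d) : mon_mul (mon_inv a) a = mon_one d.
Proof. by apply: mon_ext => i; rewrite /= !ffunE addNr. Qed.

Lemma mon_mulKV {n : nat} {d : 'I_n -> nat} (a b : Mon d) :
  mon_mul (mon_inv a) (mon_mul a b) = b.
Proof. by rewrite mon_mulA mon_mulVm mon_mul1m. Qed.

Lemma mon_mulK {n : nat} {d : 'I_n -> nat} (a b : Mon d) :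
  mon_mul a (mon_mul (mon_inv a) b) = b.
Proof. by rewrite mon_mulA (mon_mulC a) mon_mulVm mon_mul1m. Qed.

Lemma mon_mul_eq {n : nat} {d : 'I_n -> nat} (a b M : Mon d) :
  (mon_mul a b == M) = (b == mon_mul (mon_inv a) M).
Proof.
apply/eqP/eqP => [<-|->]; first by rewrite mon_mulKV.
by rewrite mon_mulK.
Qed.

Lemma coeff_cons {n : nat} {d : 'I_n -> nat} (a : int * Mon d) p m :
  coeff (a :: p) m = (if a.2 == m then a.1 else 0) + coeff p m.
Proof. by rewrite /coeff big_cons; case: ifP => _; rewrite ?add0r. Qed.

Lemma coeff_cat {n : nat} {d : 'I_n -> nat} (p q : LP d) m :
  coeff (p ++ q) m = coeff p m + coeff q m.
Proof. by rewrite /coeff big_cat. Qed.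

Lemma coeff_supp {n : nat} {d : 'I_n -> nat} (p : LP d) m :
  coeff p m != 0 -> m \in map snd p.
Proof.
elim: p => [|a p IH]; first by rewrite /coeff big_nil eqxx.
rewrite coeff_cons /= in_cons; case: (a.2 =P m) => [<-|_]; first by rewrite eqxx.
by rewrite add0r => /IH ->; rewrite orbT.
Qed.

Lemma group_sum {n : nat} {d : 'I_n -> nat} (p : LP d) (U : seq (Mon d)) (f : Mon d -> int) :
  uniq U -> {subset map snd p <= U} ->
  \sum_(a <- p) a.1 * f a.2 = \sum_(m <- U) coeff p m * f m.
Proof.
move=> uU sU.
have -> : \sum_(m <- U) coeff p m * f m =
          \sum_(m <- U) \sum_(a <- p) (if a.2 == m then a.1 * f a.2 else 0).
  apply: eq_bigr => m _; rewrite /coeff big_distrl /= big_mkcond /=.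
  by apply: eq_bigr => a _; case: eqP => [->|].
rewrite exchange_big /= [in RHS]big_seq [in LHS]big_seq; apply: eq_bigr => a ap.
have aU : a.2 \in U by apply: sU; apply: map_f.
rewrite (bigD1_seq a.2) //= eqxx big1 ?addr0 // => m /negbTE.
by rewrite eq_sym => ->.
Qed.

Lemma coeff_mul {n : nat} {d : 'I_n -> nat} (p q : LP d) M :
  coeff (lp_mul p q) M = \sum_(a <- p) a.1 * coeff q (mon_mul (mon_inv a.2) M).
Proof.
rewrite /coeff /lp_mul big_mkcond big_allpairs_dep /=.
apply: eq_bigr => a _; rewrite mulr_sumr [in RHS]big_mkcond /=.
apply: eq_bigr => b _; rewrite mon_mul_eq.
by case: ifP => _; rewrite ?mulr0.
Qed.

Lemma coeff_mul_group {n : nat} {d : 'I_n -> nat} (p q : LP d) M :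
  coeff (lp_mul p q) M = \sum_(m <- undup (map snd p)) coeff p m * coeff q (mon_mul (mon_inv m) M).
Proof.
rewrite coeff_mul (group_sum _ (undup (map snd p)) (fun m => coeff q (mon_mul (mon_inv m) M))) ?undup_uniq //.
by move=> x; rewrite mem_undup.
Qed.

Lemma sum_neq0 {T : Type} (r : seq T) (F : T -> int) :
  \sum_(x <- r) F x != 0 -> exists x, F x != 0.
Proof.
elim: r => [|a r IH]; first by rewrite big_nil eqxx.
rewrite big_cons; case: (F a =P 0) => [->|/eqP h _]; last by exists a.
by rewrite add0r => /IH.
Qed.

Lemma coeff_mul_supp {n : nat} {d : 'I_n -> nat} (p q : LP d) M :
  coeff (lp_mul p q) M != 0 ->
  exists m, coeff p m != 0 /\ coeff q (mon_mul (mon_inv m) M) != 0.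
Proof.
rewrite coeff_mul_group => /sum_neq0 [m h]; exists m.
by move: h; rewrite mulf_eq0 negb_or => /andP.
Qed.


Definition goodkey {n : nat} {d : 'I_n -> nat} (k : Mon d -> seq int) : Prop :=
  [/\ forall a b, k (mon_mul a b) = addseq (k a) (k b),
      forall a b, size (k a) = size (k b) & injective k].

Definition islead {n : nat} {d : 'I_n -> nat} (k : Mon d -> seq int) (p : LP d) (L : Mon d) : Prop :=
  coeff p L != 0 /\ forall m, coeff p m != 0 -> m != L -> lexlt (k m) (k L).

Lemma key_mulr {n : nat} {d : 'I_n -> nat} (k : Mon d -> seq int) a b c :
  goodkey k -> lexlt (k (mon_mul a c)) (k (mon_mul b c)) = lexlt (k a) (k b).
Proof. by case=> hadd hsz _; rewrite !hadd lexlt_add. Qed.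

Lemma key_mull {n : nat} {d : 'I_n -> nat} (k : Mon d -> seq int) a b c :
  goodkey k -> lexlt (k (mon_mul c a)) (k (mon_mul c b)) = lexlt (k a) (k b).
Proof. by move=> hk; rewrite !(mon_mulC c) key_mulr. Qed.

Lemma seq_max {n : nat} {d : 'I_n -> nat} (k : Mon d -> seq int) (s : seq (Mon d)) :
  goodkey k -> s != [::] -> exists x, x \in s /\ forall y, y \in s -> y != x -> lexlt (k y) (k x).
Proof.
case=> _ hsz hinj; elim: s => [//|a s IH] _.
case: (altP (s =P [::])) => [->|/IH [x [xs hx]]].
  by exists a; split; [exact: mem_head | move=> y; rewrite inE => /eqP ->; rewrite eqxx].
case: (altP (a =P x)) => [ax|ax].
  exists x; split; first by rewrite inE xs orbT.
  by move=> y; rewrite inE => /orP [/eqP ->|ys]; [rewrite ax eqxx|exact: hx].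
have kne : k a != k x by apply: contra ax => /eqP /hinj ->.
case/orP: (lexlt_total (hsz a x) kne) => h.
  exists x; split; first by rewrite inE xs orbT.
  by move=> y; rewrite inE => /orP [/eqP ->|ys] yx; [exact: h|exact: hx].
exists a; split; first exact: mem_head.
move=> y; rewrite inE => /orP [/eqP ->|ys]; first by rewrite eqxx.
move=> _; case: (altP (y =P x)) => [->//|yx].
exact: lexlt_trans (hx y ys yx) h.
Qed.

Lemma lead_exists {n : nat} {d : 'I_n -> nat} (k : Mon d -> seq int) (p : LP d) :
  goodkey k -> (exists m, coeff p m != 0) -> exists L, islead k p L.
Proof.
move=> hk [m0 h0].
set S := [seq m <- undup (map snd p) | coeff p m != 0].
have S0 : S != [::].
  apply/eqP => hS; have : m0 \in S by rewrite mem_filter h0 mem_undup coeff_supp.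
  by rewrite hS.
have [x [xS hx]] := seq_max k S hk S0.
exists x; split; first by move: xS; rewrite mem_filter => /andP [].
move=> m hm; apply: hx.
by rewrite mem_filter hm mem_undup coeff_supp.
Qed.

Lemma lead_uniq {n : nat} {d : 'I_n -> nat} (k : Mon d -> seq int) (p : LP d) L1 L2 :
  islead k p L1 -> islead k p L2 -> L1 = L2.
Proof.
move=> [h1 H1] [h2 H2]; apply/eqP/negP => /negP hne.
have hne' : L2 != L1 by rewrite eq_sym.
have := lexlt_trans (H1 _ h2 hne') (H2 _ h1 hne).
by rewrite lexlt_irr.
Qed.

Lemma lead_mul {n : nat} {d : 'I_n -> nat} (k : Mon d -> seq int) (p q : LP d) Lp Lq :
  goodkey k -> islead k p Lp -> islead k q Lq ->
  islead k (lp_mul p q) (mon_mul Lp Lq) /\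
  coeff (lp_mul p q) (mon_mul Lp Lq) = coeff p Lp * coeff q Lq.
Proof.
move=> hk [hp Hp] [hq Hq].
have cm : coeff (lp_mul p q) (mon_mul Lp Lq) = coeff p Lp * coeff q Lq.
  rewrite coeff_mul_group (bigD1_seq Lp) ?undup_uniq ?mem_undup ?coeff_supp //=.
  rewrite mon_mulKV big1 ?addr0 // => m hm.
  case: (altP (coeff p m =P 0)) => [->|cpm]; first by rewrite mul0r.
  set r := mon_mul (mon_inv m) (mon_mul Lp Lq).
  case: (altP (coeff q r =P 0)) => [->|cqr]; first by rewrite mulr0.
  exfalso.
  have rne : r != Lq.
    apply: contra hm => /eqP hr; apply/eqP.
    have : mon_mul m r = mon_mul Lp Lq by rewrite /r mon_mulK.
    by rewrite hr => /(congr1 (mon_mul^~ (mon_inv Lq))); rewrite -!mon_mulA !(mon_mulC Lq) !mon_mulVm !(mon_mulC _ (mon_one d)) !mon_mul1m.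
  have h1 : lexlt (k (mon_mul m r)) (k (mon_mul m Lq)) by rewrite key_mull //; exact: Hq.
  have h2 : lexlt (k (mon_mul m Lq)) (k (mon_mul Lp Lq)) by rewrite key_mulr //; exact: Hp.
  have := lexlt_trans h1 h2; rewrite /r mon_mulK.
  by rewrite lexlt_irr.
split=> //; split; first by rewrite cm mulf_neq0.
move=> M /coeff_mul_supp [m [cpm cqr]] hM.
set r := mon_mul (mon_inv m) M in cqr.
have eM : M = mon_mul m r by rewrite /r mon_mulK.
rewrite eM.
case: (altP (m =P Lp)) => [em|mne].
  have rne : r != Lq by apply: contra hM => /eqP er; rewrite eM em er.
  by rewrite em key_mull //; exact: Hq.
have h1 : lexlt (k (mon_mul m r)) (k (mon_mul Lp r)) by rewrite key_mulr //; exact: Hp.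
case: (altP (r =P Lq)) => [er|rne]; first by rewrite -er.
apply: lexlt_trans h1 _; rewrite key_mull //; exact: Hq.
Qed.


Definition lphom {n : nat} {d : 'I_n -> nat} (B0 : 'M[int]_n) (p : LP d) (e : 'I_n -> int) : Prop :=
  forall m, coeff p m != 0 -> forall i, mdeg B0 m i = e i.
Definition nz {n : nat} {d : 'I_n -> nat} (p : LP d) : Prop := exists m, coeff p m != 0.

Lemma mdeg_mul {n : nat} {d : 'I_n -> nat} (B0 : 'M[int]_n) (a b : Mon d) i :
  mdeg B0 (mon_mul a b) i = mdeg B0 a i + mdeg B0 b i.
Proof.
rewrite /mdeg /= ffunE (eq_bigr (fun j => B0 i j * a.2.1 j + B0 i j * b.2.1 j)) => [|j _].
  by rewrite big_split /=; ring.
by rewrite ffunE mulrDr.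
Qed.

Definition mkey {n : nat} {d : 'I_n -> nat} (B0 : 'M[int]_n) (m : Mon d) : seq int :=
  [seq mdeg B0 m i | i <- enum 'I_n] ++ ([seq m.1 i | i <- enum 'I_n] ++
  ([seq m.2.1 i | i <- enum 'I_n] ++ [seq m.2.2 p | p <- enum (zidx d)])).

Definition mkeyn {n : nat} {d : 'I_n -> nat} (B0 : 'M[int]_n) (m : Mon d) : seq int :=
  oppseq (mkey B0 m).

Lemma map_enum_inj {T : finType} (f g : T -> int) :
  [seq f i | i <- enum T] = [seq g i | i <- enum T] -> forall i, f i = g i.
Proof. by move/eq_in_map => h i; apply: h; rewrite mem_enum. Qed.

Lemma goodkey_mkey {n : nat} {d : 'I_n -> nat} (B0 : 'M[int]_n) : goodkey (@mkey n d B0).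
Proof.
split.
- move=> a b; rewrite /mkey !addseq_cat ?size_map // !addseq_map.
  congr (_ ++ (_ ++ (_ ++ _))); apply: eq_map => i; rewrite ?ffunE //.
  by rewrite mdeg_mul.
- by move=> a b; rewrite /mkey !size_cat !size_map.
- move=> a b; rewrite /mkey => /eqP; rewrite eqseq_cat ?size_map // => /andP [_].
  rewrite eqseq_cat ?size_map // => /andP [/eqP h1].
  rewrite eqseq_cat ?size_map // => /andP [/eqP h2 /eqP h3].
  apply: mon_ext; exact: map_enum_inj.
Qed.

Lemma oppseq_add s t : oppseq (addseq s t) = addseq (oppseq s) (oppseq t).
Proof. by elim: s t => [|a s IH] [|b t] //=; rewrite /oppseq /= opprD; congr (_ :: _); apply: IH. Qed.

Lemma goodkey_mkeyn {n : nat} {d : 'I_n -> nat} (B0 : 'M[int]_n) : goodkey (@mkeyn n d B0).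
Proof.
have [h1 h2 h3] := goodkey_mkey (d:=d) B0.
split.
- by move=> a b; rewrite /mkeyn h1 oppseq_add.
- by move=> a b; rewrite /mkeyn /oppseq !size_map; apply: h2.
- move=> a b; rewrite /mkeyn /oppseq => h; apply: h3.
  have /(congr1 (map (fun x => - x))) : [seq - x | x <- mkey B0 a] = [seq - x | x <- mkey B0 b] by [].
  by rewrite -!map_comp !(@eq_map _ _ _ id) ?map_id // => x /=; rewrite opprK.
Qed.

Lemma hom_mul {n : nat} {d : 'I_n -> nat} (B0 : 'M[int]_n) (p q : LP d) e1 e2 :
  lphom B0 p e1 -> lphom B0 q e2 -> lphom B0 (lp_mul p q) (fun i => e1 i + e2 i).
Proof.
move=> hp hq M /coeff_mul_supp [m [cp cq]] i.
have -> : M = mon_mul m (mon_mul (mon_inv m) M) by rewrite mon_mulK.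
by rewrite mdeg_mul (hp _ cp) (hq _ cq).
Qed.

Lemma nz_mul_l {n : nat} {d : 'I_n -> nat} (p A : LP d) :
  nz (lp_mul p A) -> nz p.
Proof. by move=> [M /coeff_mul_supp [m [cp _]]]; exists m. Qed.

Lemma key_prefix {n : nat} {d : 'I_n -> nat} (B0 : 'M[int]_n) (a b : Mon d) :
  lexlt (mkey B0 a) (mkey B0 b) ->
  lexlt [seq mdeg B0 a i | i <- enum 'I_n] [seq mdeg B0 b i | i <- enum 'I_n] ||
  ([seq mdeg B0 a i | i <- enum 'I_n] == [seq mdeg B0 b i | i <- enum 'I_n]).
Proof.
rewrite /mkey lexlt_cat ?size_map // => /orP [->//|/andP [-> _]]; by rewrite orbT.
Qed.

Lemma quot_hom {n : nat} {d : 'I_n -> nat} (B0 : 'M[int]_n) (p A R : LP d) e f :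
  lp_eq (lp_mul p A) R -> nz A -> lphom B0 A f -> nz R -> lphom B0 R e ->
  nz p /\ lphom B0 p (fun i => e i - f i).
Proof.
move=> hpA nA hA nR hR.
have np : nz p by apply: (@nz_mul_l _ _ p A); case: nR => M hM; exists M; rewrite hpA.
split=> //.
have gk1 := goodkey_mkey (d:=d) B0.
have gk2 := goodkey_mkeyn (d:=d) B0.
have degL : forall k, goodkey k -> exists L, islead k p L /\ forall i, mdeg B0 L i = e i - f i.
  move=> k gk.
  have [L hL] := lead_exists k p gk np.
  have [LA hLA] := lead_exists k A gk nA.
  have [[hc _] _] := lead_mul k p A L LA gk hL hLA.
  exists L; split=> // i.
  have := hR (mon_mul L LA); rewrite -hpA => /(_ hc i).
  rewrite mdeg_mul (hA _ hLA.1) => <-; ring.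
have [L1 [[c1 H1] d1]] := degL _ gk1.
have [L2 [[c2 H2] d2]] := degL _ gk2.
move=> m cm i.
set U0 := [seq e i - f i | i <- enum 'I_n].
have u1 : [seq mdeg B0 L1 i | i <- enum 'I_n] = U0 by apply: eq_map.
have u2 : [seq mdeg B0 L2 i | i <- enum 'I_n] = U0 by apply: eq_map.
have le1 : lexlt [seq mdeg B0 m i | i <- enum 'I_n] U0 || ([seq mdeg B0 m i | i <- enum 'I_n] == U0).
  case: (altP (m =P L1)) => [->|ne]; first by rewrite u1 eqxx orbT.
  by rewrite -u1; apply: key_prefix; apply: H1.
have le2 : lexlt U0 [seq mdeg B0 m i | i <- enum 'I_n] || (U0 == [seq mdeg B0 m i | i <- enum 'I_n]).
  case: (altP (m =P L2)) => [->|ne]; first by rewrite u2 eqxx orbT.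
  rewrite -u2; apply: key_prefix.
  have := H2 m cm ne; rewrite /mkeyn lexlt_opp //.
  by case: gk1 => _ hs _; apply: hs.
have h := @lexle_antisym _ _ le1 le2.
exact: (map_enum_inj (fun i => mdeg B0 m i) (fun i => e i - f i) h i).
Qed.


Lemma coeff_single {n : nat} {d : 'I_n -> nat} (c : int) (m0 m : Mon d) :
  coeff [:: (c, m0)] m = if m0 == m then c else 0.
Proof. by rewrite coeff_cons /coeff big_nil addr0. Qed.

Lemma hom_eq {n : nat} {d : 'I_n -> nat} (B0 : 'M[int]_n) (p q : LP d) e :
  lp_eq p q -> lphom B0 q e -> lphom B0 p e.
Proof. by move=> h hq m; rewrite h; apply: hq. Qed.

Lemma hom_ext {n : nat} {d : 'I_n -> nat} (B0 : 'M[int]_n) (p : LP d) e e' :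
  (forall i, e i = e' i) -> lphom B0 p e -> lphom B0 p e'.
Proof. by move=> h hp m cm i; rewrite -h; apply: hp. Qed.

Lemma hom_single {n : nat} {d : 'I_n -> nat} (B0 : 'M[int]_n) c (m0 : Mon d) :
  lphom B0 [:: (c, m0)] (mdeg B0 m0).
Proof. by move=> m; rewrite coeff_single; case: (m0 =P m) => [<-|]; rewrite ?eqxx. Qed.

Lemma hom_one {n : nat} {d : 'I_n -> nat} (B0 : 'M[int]_n) :
  lphom B0 (lp_one d) (fun _ => 0).
Proof.
apply: hom_ext (hom_single _ _ _) => i.
by rewrite /mdeg /= ffunE big1 ?subr0 // => j _; rewrite ffunE mulr0.
Qed.

Lemma hom_pow {n : nat} {d : 'I_n -> nat} (B0 : 'M[int]_n) (p : LP d) g (e : nat) :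
  lphom B0 p g -> lphom B0 (lp_pow p e) (fun i => e%:Z * g i).
Proof.
move=> hp; elim: e => [|e IH].
  by apply: hom_ext (hom_one _) => i; rewrite mul0r.
apply: hom_ext (hom_mul _ _ _ _ _ hp IH) => i.
by rewrite -addn1 PoszD; ring.
Qed.

Lemma hom_prod {n : nat} {d : 'I_n -> nat} (B0 : 'M[int]_n) (T : Type) (s : seq T) (F : T -> LP d)
  (g : T -> 'I_n -> int) :
  (forall t, lphom B0 (F t) (g t)) ->
  lphom B0 (lp_prod [seq F t | t <- s]) (fun i => \sum_(t <- s) g t i).
Proof.
move=> hF; elim: s => [|t s IH].
  by apply: hom_ext (hom_one _) => i; rewrite big_nil.
apply: hom_ext (hom_mul _ _ _ _ _ (hF t) IH) => i.
by rewrite big_cons.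
Qed.

Lemma hom_flatten {n : nat} {d : 'I_n -> nat} (B0 : 'M[int]_n) (ps : seq (LP d)) e :
  (forall p, p \in ps -> lphom B0 p e) -> lphom B0 (flatten ps) e.
Proof.
elim: ps => [|p ps IH] H m; first by rewrite /coeff big_nil eqxx.
rewrite /= coeff_cat; case: (altP (coeff p m =P 0)) => [->|cp].
  by rewrite add0r; apply: IH => q qps; apply: H; rewrite inE qps orbT.
by move=> _; apply: (H p (mem_head _ _)).
Qed.

Definition ev {n : nat} {d : 'I_n -> nat} (p : LP d) : int := \sum_(a <- p) a.1.

Lemma ev_mul {n : nat} {d : 'I_n -> nat} (p q : LP d) : ev (lp_mul p q) = ev p * ev q.
Proof.
rewrite /ev /lp_mul big_allpairs_dep /= mulr_suml; apply: eq_bigr => a _.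
by rewrite mulr_sumr.
Qed.

Lemma ev_one {n : nat} (d : 'I_n -> nat) : ev (lp_one d) = 1.
Proof. by rewrite /ev big_cons big_nil addr0. Qed.

Lemma ev_pow {n : nat} {d : 'I_n -> nat} (p : LP d) e : ev (lp_pow p e) = ev p ^+ e.
Proof. by elim: e => [|e IH]; rewrite ?ev_one // exprS -IH /lp_pow /= ev_mul. Qed.

Lemma ev_flatten {n : nat} {d : 'I_n -> nat} (ps : seq (LP d)) : ev (flatten ps) = \sum_(p <- ps) ev p.
Proof. by rewrite /ev big_flatten. Qed.

Lemma ev_coeff {n : nat} {d : 'I_n -> nat} (p : LP d) U :
  uniq U -> {subset map snd p <= U} -> ev p = \sum_(m <- U) coeff p m.
Proof.
move=> uU sU; rewrite /ev.
have := group_sum p U (fun _ => 1) uU sU.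
by under eq_bigr do rewrite mulr1; under [in RHS]eq_bigr do rewrite mulr1.
Qed.

Lemma ev_eq {n : nat} {d : 'I_n -> nat} (p q : LP d) : lp_eq p q -> ev p = ev q.
Proof.
move=> h; set U := undup (map snd p ++ map snd q).
rewrite (ev_coeff p U) ?(ev_coeff q U) ?undup_uniq //.
- by apply: eq_bigr => m _; rewrite h.
- by move=> x xq; rewrite mem_undup mem_cat xq orbT.
- by move=> x xq; rewrite mem_undup mem_cat xq.
Qed.

Lemma ev_nz {n : nat} {d : 'I_n -> nat} (p : LP d) : ev p != 0 -> nz p.
Proof.
rewrite (ev_coeff p (undup (map snd p))) ?undup_uniq //; last by move=> x; rewrite mem_undup.
by move/sum_neq0.
Qed.


Lemma seedBY_rcons {n : nat} (d : 'I_n -> nat) (B0 : 'M[int]_n) w k :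
  seedBY d B0 (rcons w k) =
  (bmut d k (seedBY d B0 w).1, ymut d k (seedBY d B0 w).1 (seedBY d B0 w).2).
Proof. by rewrite /seedBY foldl_rcons. Qed.

Lemma tsum_aux {n : nat} (d : 'I_n -> nat) (k : 'I_n) (y : Trop d) l (a m : nat) :
  (foldr (fun s acc => tmin (tmul (tz d k s) (tpow y s%:Z)) acc) (tone d) (iota a m)).1 l =
  if (0 <= y.1 l) || (m == 0)%N then 0 else (a + m - 1)%:Z * y.1 l.
Proof.
elim: m a => [|m IH] a /=; first by rewrite orbT ffunE.
rewrite ffunE IH !ffunE add0r.
case: (lerP 0 (y.1 l)) => hv /=.
  by rewrite (_ : Num.min _ 0 = 0) //; apply/min_idPr; apply: mulr_ge0.
case: m {IH} => [|m] /=.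
  rewrite addn1 subn1 /=; apply/min_idPl; apply: mulr_ge0_le0 => //; exact: ltW.
have -> : (a.+1 + m.+1 - 1 = a + m.+2 - 1)%N by lia.
apply/min_idPr; rewrite ler_nM2r // lez_nat.
lia.
Qed.

Definition min0 (v : int) : int := Num.min 0 v.

Lemma tsum_y {n : nat} (d : 'I_n -> nat) (k : 'I_n) (y : Trop d) l :
  (tsum k y).1 l = (d k)%:Z * min0 (y.1 l).
Proof.
rewrite /tsum tsum_aux add1n subn1 /= /min0.
case: (lerP 0 (y.1 l)) => hv /=.
  by rewrite mulr0.
by case: (d k) => [|dk] /=; rewrite ?mul0r.
Qed.

Lemma ymut_y {n : nat} (d : 'I_n -> nat) k (B : 'M[int]_n) (y : 'I_n -> Trop d) i l :
  (ymut d k B y i).1 l =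
  if i == k then - (y k).1 l
  else (y i).1 l + posp (B k i) * (d k)%:Z * (y k).1 l + (- B k i) * ((d k)%:Z * min0 ((y k).1 l)).
Proof.
rewrite /ymut; case: (i == k); rewrite /tpow /tmul /= !ffunE //.
  by rewrite mulN1r.
by rewrite tsum_y.
Qed.


Definition Gmut {n : nat} (d : 'I_n -> nat) (B0 : 'M[int]_n) (k : 'I_n) (B : 'M[int]_n)
  (y : 'I_n -> Trop d) (G : 'M[int]_n) : 'M[int]_n :=
  \matrix_(i, j) if j == k then
     - G i k + \sum_(l < n) (d k)%:Z * posp (- B l k) * G i l
             + \sum_(l < n) B0 i l * ((d k)%:Z * min0 ((y k).1 l))
   else G i j.

Fixpoint Grev {n : nat} (d : 'I_n -> nat) (B0 : 'M[int]_n) (rw : seq 'I_n) : 'M[int]_n :=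
  match rw with
  | [::] => 1%:M
  | k :: rw' => Gmut d B0 k (seedBY d B0 (rev rw')).1 (seedBY d B0 (rev rw')).2 (Grev d B0 rw')
  end.

Definition Gm {n : nat} (d : 'I_n -> nat) (B0 : 'M[int]_n) (w : seq 'I_n) : 'M[int]_n :=
  Grev d B0 (rev w).

Lemma Gm_rcons {n : nat} (d : 'I_n -> nat) (B0 : 'M[int]_n) w k :
  Gm d B0 (rcons w k) = Gmut d B0 k (seedBY d B0 w).1 (seedBY d B0 w).2 (Gm d B0 w).
Proof. by rewrite /Gm rev_rcons /= revK. Qed.

Lemma Gm_nil {n : nat} (d : 'I_n -> nat) (B0 : 'M[int]_n) : Gm d B0 [::] = 1%:M.
Proof. by []. Qed.

Lemma posp_mul (c x : int) : 0 <= c -> posp (c * x) = c * posp x.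
Proof.
rewrite /posp => hc; case: (lerP 0 x) => hx.
  by rewrite mulr_ge0.
case: (altP (c =P 0)) => [->|cn]; first by rewrite mul0r lexx.
have : c * x < 0 by rewrite pmulr_rlt0 // lt_neqAle eq_sym cn hc.
by move/lt_geF => ->; rewrite mulr0.
Qed.

Lemma compare_seed {n : nat} (d : 'I_n -> nat) (B : 'M[int]_n) w :
  (seedBY (ones n) (dmat d B) w).1 = dmat d (seedBY d B w).1 /\
  forall i l, ((seedBY (ones n) (dmat d B) w).2 i).1 l = ((seedBY d B w).2 i).1 l.
Proof.
elim/last_ind: w => [|w k [IH1 IH2]].
  by split=> // i l; rewrite /= /yinit !ffunE.
rewrite !seedBY_rcons /=; split.
  apply/matrixP => i j; rewrite IH1 /bmut /dmat !mxE.
  case: ifP => _; first by rewrite mulrN.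
  by rewrite /ones mul1r -mulrN !posp_mul //; ring.
move=> i l; rewrite !ymut_y IH1 /dmat !mxE !IH2 /ones.
case: ifP => // _.
rewrite -mulrN posp_mul // /min0; ring.
Qed.

Lemma compare_G {n : nat} (d : 'I_n -> nat) (B : 'M[int]_n) w i j :
  (d i)%:Z * Gm d B w i j = Gm (ones n) (dmat d B) w i j * (d j)%:Z.
Proof.
elim/last_ind: w i j => [|w k IH] i j.
  rewrite !Gm_nil !mxE; case: (altP (i =P j)) => [->|]; first by rewrite mulrC.
  by move=> _; rewrite mulr0 mul0r.
have [S1 S2] := compare_seed d B w.
rewrite !Gm_rcons /Gmut !mxE; case: ifP => [/eqP ->|_]; last exact: IH.
rewrite S1 !mulrDr !mulrDl; congr (_ + _ + _).
- by rewrite mulrN IH mulNr.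
- rewrite mulr_sumr mulr_suml; apply: eq_bigr => l _.
  rewrite /dmat !mxE /ones mul1r -mulrN posp_mul //.
  rewrite (_ : (d i)%:Z * ((d k)%:Z * posp (- (seedBY d B w).1 l k) * Gm d B w i l) =
     (d k)%:Z * posp (- (seedBY d B w).1 l k) * ((d i)%:Z * Gm d B w i l)); last by ring.
  by rewrite IH; ring.
- rewrite mulr_sumr mulr_suml; apply: eq_bigr => l _.
  by rewrite /dmat !mxE /ones S2; ring.
Qed.


Lemma skew_step (ri rj rk dk bij bji bik bki bjk bkj : int) :
  0 <= ri -> 0 <= rj -> 0 < rk ->
  ri * bij = - (rj * bji) -> ri * bik = - (rk * bki) -> rk * bkj = - (rj * bjk) ->
  ri * (bij + dk * (posp (- bik) * bkj + bik * posp bkj)) =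
  - (rj * (bji + dk * (posp (- bjk) * bki + bjk * posp bki))).
Proof.
move=> hi hj hk s3 s1 s2.
have h1 : ri * - bik = rk * bki by rewrite -[RHS]opprK -s1; ring.
have h2 : rk * bkj = rj * - bjk by rewrite s2; ring.
have e1 : ri * posp (- bik) = rk * posp bki.
  by rewrite -(posp_mul _ _ hi) h1 posp_mul // ltW.
have e2 : rk * posp bkj = rj * posp (- bjk).
  by rewrite -(posp_mul _ _ (ltW hk)) h2 posp_mul.
apply: (mulfI (x := rk)); first by rewrite gt_eqF.
rewrite (_ : rk * (ri * (bij + dk * (posp (- bik) * bkj + bik * posp bkj))) =
   rk * (ri * bij) + dk * ((ri * posp (- bik)) * (rk * bkj) + (ri * bik) * (rk * posp bkj))); last by ring.
rewrite e1 s2 s1 e2 s3; ring.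
Qed.

Lemma skew_inv {n : nat} (d : 'I_n -> nat) (B0 : 'M[int]_n) (r : 'I_n -> nat) :
  (forall i, (0 < r i)%N) -> (forall i j, (r i)%:Z * B0 i j = - ((r j)%:Z * B0 j i)) ->
  forall w i j, (r i)%:Z * (seedBY d B0 w).1 i j = - ((r j)%:Z * (seedBY d B0 w).1 j i).
Proof.
move=> hr hB; elim/last_ind => [|w k IH] i j //.
rewrite seedBY_rcons /bmut !mxE /=.
case: (altP (i =P k)) => [->|ik]; case: (altP (j =P k)) => [->|jk] /=;
  rewrite ?eqxx ?orbT ?(negbTE ik) ?(negbTE jk) /=.
- by rewrite !mulrN opprK {1}IH opprK.
- by rewrite !mulrN opprK IH opprK.
- by rewrite !mulrN opprK IH opprK.
by apply: (skew_step _ _ (r k)%:Z); rewrite ?ltz_nat //.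
Qed.

Lemma diag0 {n : nat} (d : 'I_n -> nat) (B0 : 'M[int]_n) (r : 'I_n -> nat) :
  (forall i, (0 < r i)%N) -> (forall i j, (r i)%:Z * B0 i j = - ((r j)%:Z * B0 j i)) ->
  forall w i, (seedBY d B0 w).1 i i = 0.
Proof.
move=> hr hB w i; have := skew_inv d B0 r hr hB w i i.
move/eqP; rewrite -addr_eq0 -mulr2n mulrn_eq0 /= mulf_eq0 => /orP [|/eqP //].
by rewrite eqz_nat gtn_eqF.
Qed.


Lemma GB_id {n : nat} (d : 'I_n -> nat) (B0 : 'M[int]_n)
  (hdiag : forall w i, (seedBY d B0 w).1 i i = 0) :
  forall w i q, \sum_(j < n) Gm d B0 w i j * (seedBY d B0 w).1 j q =
                \sum_(l < n) B0 i l * ((seedBY d B0 w).2 q).1 l.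
Proof.
elim/last_ind => [|w k IH] i q.
  rewrite Gm_nil /= /yinit.
  have -> : \sum_(j < n) (1%:M : 'M[int]_n) i j * B0 j q = (1%:M *m B0) i q by rewrite mxE.
  rewrite mul1mx.
  have -> : \sum_(l < n) B0 i l * [ffun j => if j == q then 1 else 0] l = (B0 *m 1%:M) i q.
    by rewrite mxE; apply: eq_bigr => l _; rewrite ffunE !mxE; case: (l == q).
  by rewrite mulmx1.
have dk0 := hdiag w k.
rewrite Gm_rcons seedBY_rcons /=.
set B := (seedBY d B0 w).1; set y := (seedBY d B0 w).2; set G := Gm d B0 w.
set dk := (d k)%:Z.
set gk := - G i k + \sum_(l < n) dk * posp (- B l k) * G i l
             + \sum_(l < n) B0 i l * (dk * min0 ((y k).1 l)).
have G'E : forall j, Gmut d B0 k B y G i j = if j == k then gk else G i j.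
  by move=> j; rewrite /Gmut mxE.
case: (altP (q =P k)) => [->|qk].
  rewrite (eq_bigr (fun j => - (G i j * B j k))); last first.
    move=> j _; rewrite G'E /bmut mxE eqxx orbT.
    case: ifP => [/eqP ->|_]; last by rewrite mulrN.
    by rewrite [B k k]dk0 oppr0 !mulr0 oppr0.
  rewrite sumrN IH -sumrN; apply: eq_bigr => l _.
  by rewrite ymut_y eqxx mulrN.
set F := fun j => G i j * (B j q + dk * (posp (- B j k) * B k q + B j k * posp (B k q))).
have -> : \sum_(j < n) Gmut d B0 k B y G i j * bmut d k B j q =
          \sum_(j < n) F j + (gk * (- B k q) - F k).
  rewrite (bigD1 k) // [in RHS](bigD1 k) //=.
  rewrite (eq_bigr (fun j => F j)); last first.
    move=> j jk; rewrite G'E (negbTE jk) /bmut mxE (negbTE jk) (negbTE qk) //.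
  rewrite G'E eqxx /bmut mxE eqxx /=; ring.
set S1 := \sum_(j < n) posp (- B j k) * G i j.
set S3 := \sum_(l < n) B0 i l * (dk * min0 ((y k).1 l)).
have -> : \sum_(j < n) F j = \sum_(j < n) G i j * B j q
    + dk * B k q * S1 + dk * posp (B k q) * \sum_(j < n) G i j * B j k.
  rewrite /F (eq_bigr (fun j => G i j * B j q + dk * B k q * (posp (- B j k) * G i j)
            + dk * posp (B k q) * (G i j * B j k))) => [|j _]; last by ring.
  by rewrite !big_split /= -!mulr_sumr.
have gkE : gk = - G i k + dk * S1 + S3.
  by rewrite /gk /S1 mulr_sumr; congr (_ + _ + _); apply: eq_bigr => l _; ring.
have FkE : F k = G i k * B k q.
  rewrite /F [B k k]dk0 oppr0 /posp lexx !mul0r addr0 mulr0 addr0 //.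
rewrite gkE FkE !IH.
rewrite [in RHS](eq_bigr (fun l => B0 i l * ((y q).1 l) + posp (B k q) * dk * (B0 i l * (y k).1 l)
   + (- B k q) * (B0 i l * (dk * min0 ((y k).1 l))))); last first.
  by move=> l _; rewrite ymut_y (negbTE qk); ring.
rewrite !big_split /= -!mulr_sumr -/S3; ring.
Qed.


Lemma ev_prod {n : nat} {d : 'I_n -> nat} (ps : seq (LP d)) : ev (lp_prod ps) = \prod_(p <- ps) ev p.
Proof. by elim: ps => [|p ps IH]; rewrite ?big_nil ?ev_one // big_cons /= ev_mul IH. Qed.

Lemma ev_trop {n : nat} {d : 'I_n -> nat} (t : Trop d) : ev (lp_trop t) = 1.
Proof. by rewrite /ev big_cons big_nil addr0. Qed.

Lemma posp_ge0 x : 0 <= posp x.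
Proof. by rewrite /posp; case: ifP. Qed.

Lemma exp_nonneg (s dk : nat) (b : int) : (s <= dk)%N -> 0 <= s%:Z * b + dk%:Z * posp (- b).
Proof.
move=> sd; case: (lerP 0 b) => hb.
  by apply: addr_ge0; [apply: mulr_ge0 | apply: mulr_ge0; rewrite ?posp_ge0].
rewrite /posp oppr_ge0 (ltW hb).
rewrite (_ : s%:Z * b + dk%:Z * - b = (dk%:Z - s%:Z) * (- b)); last by ring.
by apply: mulr_ge0; [rewrite subr_ge0 lez_nat | rewrite oppr_ge0 ltW].
Qed.

Lemma sum_iota_gt0 (m : nat) (F : nat -> int) :
  (forall s, 0 < F s) -> 0 < \sum_(s <- iota 0 m.+1) F s.
Proof.
move=> hF; rewrite /= big_cons.
have h1 := hF 0%N.
have h2 : 0 <= \sum_(s <- iota 1 m) F s by apply: sumr_ge0 => s _; apply: ltW.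
by rewrite ltr_wpDr. 
Qed.

Lemma exch_step {n : nat} (d : 'I_n -> nat) (B0 B G : 'M[int]_n) (y : 'I_n -> Trop d)
  (x : 'I_n -> LP d) (k : 'I_n) (x' : LP d) :
  (forall j, nz (x j) /\ lphom B0 (x j) (fun i => G i j) /\ 0 < ev (x j)) ->
  (forall i, \sum_(j < n) G i j * B j k = \sum_(l < n) B0 i l * (y k).1 l) ->
  exch d B y x k x' ->
  nz x' /\ lphom B0 x' (fun i => Gmut d B0 k B y G i k) /\ 0 < ev x'.
Proof.
move=> hx hid hex; rewrite /exch in hex.
set dk := (d k)%:Z.
set R := flatten _ in hex.
set A := lp_trop (tsum k (y k)) in hex.
set e := fun i => \sum_(j < n) dk * posp (- B j k) * G i j.
set degT := fun i => mdeg B0 (([ffun _ => 0], tsum k (y k)) : Mon d) i.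
have evR : 0 < ev R.
  rewrite /R ev_flatten big_map; apply: sum_iota_gt0 => s.
  rewrite ev_mul ev_trop mul1r ev_prod big_map; apply: prodr_gt0 => j _.
  rewrite ev_pow; apply: exprn_gt0.
  by have [_ [_ ?]] := hx j.
have homR : lphom B0 R e.
  apply: hom_flatten => p /mapP [s sin ->].
  have sd : (s <= d k)%N by move: sin; rewrite mem_iota add0n ltnS.
  set t := tmul (tz d k s) (tpow (y k) s%:Z).
  have hF : forall j, lphom B0 (lp_pow (x j) (absz (s%:Z * B j k + (d k)%:Z * posp (- B j k))))
     (fun i => (absz (s%:Z * B j k + (d k)%:Z * posp (- B j k)))%:Z * G i j).
    by move=> j; apply: hom_pow; have [_ [? _]] := hx j.
  apply: hom_ext (hom_mul _ _ _ _ _ (hom_single B0 1 (([ffun _ => 0], t) : Mon d))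
                    (hom_prod B0 _ (enum 'I_n) _ _ hF)) => i.
  rewrite /mdeg /= ffunE sub0r big_enum /=.
  rewrite [X in _ + X](eq_bigr (fun j => s%:Z * (G i j * B j k) + dk * posp (- B j k) * G i j)); last first.
    by move=> j _; rewrite gez0_abs ?exp_nonneg // /dk; ring.
  rewrite [X in - X + _](eq_bigr (fun l => s%:Z * (B0 i l * (y k).1 l))); last first.
    by move=> l _; rewrite /t /tmul /tz /tpow /= !ffunE add0r; ring.
  by rewrite big_split /= -!mulr_sumr hid /e; ring.
have nA : nz A by apply: ev_nz; rewrite ev_trop.
have hA : lphom B0 A degT by apply: hom_single.
have nR : nz R by apply: ev_nz; rewrite gt_eqF.
have [np1 hp1] := quot_hom B0 _ _ _ e degT hex nA hA nR homR.
have [xk1 [xk2 xk3]] := hx k.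
have [nx' hx'] := quot_hom B0 x' (x k) _ _ (fun i => G i k) (fun m => erefl) xk1 xk2 np1 hp1.
split=> //; split.
  apply: hom_ext hx' => i.
  rewrite /Gmut mxE eqxx /e /degT /mdeg /= ffunE sub0r opprK.
  rewrite [X in _ + X - _](eq_bigr (fun l => B0 i l * (dk * min0 ((y k).1 l)))) => [|l _]; last by rewrite tsum_y.
  rewrite /dk; ring.
have := ev_eq _ _ hex; rewrite !ev_mul ev_trop mulr1 => evE.
by move: evR; rewrite -evE pmulr_lgt0.
Qed.


Lemma main_ind {n : nat} (d : 'I_n -> nat) (B0 : 'M[int]_n)
  (hdiag : forall w i, (seedBY d B0 w).1 i i = 0)
  (X : seq 'I_n -> 'I_n -> LP d) (hX : is_XPattern d B0 X) :
  forall w j, nz (X w j) /\ lphom B0 (X w j) (fun i => Gm d B0 w i j) /\ 0 < ev (X w j).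
Proof.
case: hX => h0 hS; elim/last_ind => [|w k IH] j.
  have evx : ev (X [::] j) = 1 by rewrite (ev_eq _ _ (h0 j)) /ev /= big_cons big_nil addr0.
  split; first by apply: ev_nz; rewrite evx.
  split; last by rewrite evx.
  apply: hom_eq (h0 j) _; apply: hom_ext (hom_single _ _ _) => i.
  rewrite /mdeg /= big1 => [|l _]; last by rewrite ffunE mulr0.
  by rewrite ffunE Gm_nil !mxE subr0; case: (i == j).
have [hne hex] := hS w k.
case: (altP (j =P k)) => [->|jk].
  rewrite Gm_rcons; apply: exch_step hex => //.
  by move=> i; exact: (GB_id d B0 hdiag w i k).
have [a [b c]] := IH j.
have e := hne j jk.
split; first by case: a => m hm; exists m; rewrite e.
split; last by rewrite (ev_eq _ _ e).
apply: hom_eq e _; apply: hom_ext b => i.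
by rewrite Gm_rcons /Gmut mxE (negbTE jk).
Qed.

Lemma G_det {n : nat} (d : 'I_n -> nat) (B0 : 'M[int]_n)
  (hdiag : forall w i, (seedBY d B0 w).1 i i = 0)
  (X : seq 'I_n -> 'I_n -> LP d) (hX : is_XPattern d B0 X) t G :
  is_Gmatrix d B0 X t G -> forall i j, G i j = Gm d B0 t i j.
Proof.
move=> hG i j.
have [[m cm] [hh _]] := main_ind d B0 hdiag X hX t j.
by rewrite -(hG j m cm i) (hh m cm i).
Qed.

Theorem mainTheorem13 (n : nat) (B : 'M[int]_n) (d : 'I_n -> nat)
  (hd : forall i, (0 < d i)%N) (hB : skew_symmetrizable B)
  (X : seq 'I_n -> 'I_n -> LP d) (hX : is_XPattern d B X)
  (X1 : seq 'I_n -> 'I_n -> LP (ones n)) (hX1 : is_XPattern (ones n) (dmat d B) X1)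
  (t : seq 'I_n) (G G1 : 'M[int]_n)
  (hG : is_Gmatrix d B X t G) (hG1 : is_Gmatrix (ones n) (dmat d B) X1 t G1) :
  forall i j, (d i)%:Z * G i j = G1 i j * (d j)%:Z.
Proof.
case: hB => r [hr hrB].
have hdiag := diag0 d B r hr hrB.
have hdiag1 : forall w i, (seedBY (ones n) (dmat d B) w).1 i i = 0.
  by move=> w i; have [-> _] := compare_seed d B w; rewrite /dmat mxE hdiag mulr0.
move=> i j.
rewrite (G_det d B hdiag X hX t G hG) (G_det _ _ hdiag1 X1 hX1 t G1 hG1).
exact: compare_G.
Qed.
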